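(* Let $V=\mathbb{R}^{d\times k}$ and let $\mathfrak{S}_d$ act on $V$ by permuting the rows of a matrix ($X\mapsto PX$ for permutation matrices $P$). If $d\ge m$, then $$\dim\big(\mathbb{R}[V]_m^{\mathfrak{S}_d}\big)=\sum_{j=0}^m\sum_{\alpha\vdash j}\prod_{i=1}^j\binom{\binom{i+k-1}{i}+\mu_i(\alpha)-1}{\mu_i(\alpha)},$$ which is independent of $d$.
   Context: $\mathbb{R}[V]_m$ denotes the real polynomials on $V$ of total degree at most $m$, and $\mathbb{R}[V]_m^{G}$ the subspace of $G$-invariant ones. A partition $\alpha\vdash j$ of $j$ is a non-increasing sequence of positive integers summing to $j$ (the empty partition for $j=0$); $\mu_i(\alpha)$ denotes the number of parts of $\alpha$ equal to $i$. *)

(* Defs.v *)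
From HB Require Import structures.
From mathcomp Require Import all_boot all_order all_algebra all_fingroup.
From mathcomp Require Import reals.
From mathcomp Require Import mpoly.
Set Implicit Arguments. Unset Strict Implicit. Unset Printing Implicit Defensive.
Import Order.TTheory GRing.Theory Num.Theory.
Local Open Scope ring_scope.

Definition has_dim (R : pzRingType) (V : lmodType R) (S : V -> Prop) (N : nat) : Prop :=
  exists B : 'I_N -> V,
    [/\ forall i, S (B i),
        forall c : 'I_N -> R, \sum_(i < N) c i *: B i = 0 -> forall i, c i = 0
      & forall v, S v -> exists c : 'I_N -> R, v = \sum_(i < N) c i *: B i].

(* Polynomial functions on V = R^(d x k): polynomials in the d*k entries,
   a matrix X being evaluated through its vectorisation mxvec X. *)
Definition evalM (R : realType) (d k : nat) (p : {mpoly R[d * k]})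
  (X : 'M[R]_(d, k)) : R := p.@[fun i => mxvec X 0 i].

(* R[V]_m^{S_d}: polynomials of total degree at most m invariant under
   X |-> P X for every permutation matrix P. *)
Definition inv_poly_le (R : realType) (d k m : nat) : {mpoly R[d * k]} -> Prop :=
  fun p => (msize p <= m.+1)%N /\
    forall (s : 'S_d) (X : 'M[R]_(d, k)),
         evalM p (perm_mx s *m X) = evalM p X.

Definition is_partition (j : nat) (a : seq nat) : bool :=
  [&& sorted geq a, all (fun x => 0 < x)%N a & sumn a == j].

Fixpoint seqs_len (n b : nat) : seq (seq nat) :=
  match n with
  | 0 => [:: [::]]
  | n'.+1 => [seq x :: s | x <- iota 0 b, s <- seqs_len n' b]
  end.

Definition partitions (j : nat) : seq (seq nat) :=
  undup [seq a <- flatten [seq seqs_len l j.+1 | l <- iota 0 j.+1]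
        | is_partition j a].

Definition mult (i : nat) (a : seq nat) : nat := count_mem i a.

(* Main.v *)
Require Import Defs.
From HB Require Import structures.
From mathcomp Require Import all_boot all_order all_algebra all_fingroup.
From mathcomp Require Import reals.
From mathcomp Require Import mpoly.
Set Implicit Arguments. Unset Strict Implicit. Unset Printing Implicit Defensive.

Lemma uniq_flatten_tag (T U : eqType) (f : T -> seq U) (g : U -> T) (s : seq T) :
  uniq s -> (forall x, x \in s -> uniq (f x)) ->
  (forall x y, x \in s -> y \in f x -> g y = x) -> uniq (flatten (map f s)).
Proof.
elim: s => //= x s IH /andP[xs us] uf hg.
rewrite cat_uniq uf ?mem_head //= IH //; last first.
- by move=> z y zs; apply: hg; rewrite inE zs orbT.
- by move=> z zs; apply: uf; rewrite inE zs orbT.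
rewrite andbT; apply/hasPn => y /flattenP [t /mapP [z zs ->] yz].
apply/negP => yx.
have e1 := hg x y (mem_head _ _) yx.
have e2 : g y = z by apply: hg => //; rewrite inE zs orbT.
have xz : x = z by rewrite -e1 e2.
by move: xs; rewrite xz zs.
Qed.

Lemma sum_if_eq (s : seq nat) (i : nat) (F : nat -> nat) :
  uniq s -> \sum_(x <- s) (if x == i then F x else 0) = if i \in s then F i else 0.
Proof.
elim: s => [|x s IH]; first by rewrite big_nil.
rewrite /= big_cons inE => /andP[xs us]; rewrite IH //.
have [exi|ne] := eqVneq x i.
  by subst x; rewrite ?eqxx (negbTE xs) addn0.
by rewrite ?add0n ?(negbTE ne) /=; case: (i \in s).
Qed.

Lemma sum_if_eqT (T : eqType) (s : seq T) (i : T) (F : T -> nat) :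
  uniq s -> \sum_(x <- s) (if x == i then F x else 0) = if i \in s then F i else 0.
Proof.
elim: s => [|x s IH]; first by rewrite big_nil.
rewrite /= big_cons inE => /andP[xs us]; rewrite IH //.
have [exi|ne] := eqVneq x i.
  by subst x; rewrite ?eqxx (negbTE xs) addn0.
by rewrite ?add0n ?(negbTE ne) /=; case: (i \in s).
Qed.

Lemma sum_count_mem (T : eqType) (X s : seq T) : uniq X ->
  \sum_(x <- X) count_mem x s = count (mem X) s.
Proof.
move=> uX; elim: s => [|y s IH] /=; first by rewrite big1.
rewrite big_split /= IH; congr (_ + _).
rewrite (eq_bigr (fun x => if x == y then 1 else 0)); last by move=> x _; rewrite eq_sym; case: eqP.
by rewrite sum_if_eqT //; case: (y \in X).
Qed.

Lemma map_nth_index (T : eqType) (X : seq T) (c : seq nat) :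
  uniq X -> size c = size X -> [seq nth 0 c (index x X) | x <- X] = c.
Proof.
move=> uX sc; apply: (@eq_from_nth _ 0); first by rewrite size_map sc.
move=> i; rewrite size_map => iX.
case: X uX sc iX => [|x0 X'] uX sc iX //.
by rewrite (nth_map x0) // index_uniq.
Qed.

Lemma all2_map_same (S T U : Type) (r : T -> U -> bool) (f : S -> T) (g : S -> U) s :
  all2 r (map f s) (map g s) = all (fun x => r (f x) (g x)) s.
Proof. by elim: s => //= x s ->. Qed.

Lemma sumn_filter_pos (s : seq nat) : sumn [seq x <- s | 0 < x] = sumn s.
Proof. by elim: s => //= x s IH; case: x => //= x; rewrite IH. Qed.

Lemma elem_le_sumn (s : seq nat) x : x \in s -> x <= sumn s.
Proof.
elim: s => //= y s IH; rewrite inE => /orP[/eqP->|/IH h]; first exact: leq_addr.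
exact: leq_trans h (leq_addl _ _).
Qed.

Lemma size_le_sumn (s : seq nat) : all (fun x => 0 < x) s -> size s <= sumn s.
Proof. elim: s => //= x s IH /andP[x0 /IH h]; by rewrite -add1n leq_add. Qed.

Lemma sumn_map_const (T : Type) (s : seq T) c : sumn [seq c | _ <- s] = size s * c.
Proof. by elim: s => //= _ s ->; rewrite mulSn. Qed.

Fixpoint cvecs (N mu : nat) : seq (seq nat) :=
  match N with
  | 0 => if mu == 0 then [:: [::]] else [::]
  | N'.+1 => flatten [seq [seq x :: s | s <- cvecs N' (mu - x)] | x <- iota 0 mu.+1]
  end.

Lemma cvecsS N mu : cvecs N.+1 mu =
  flatten [seq [seq x :: s | s <- cvecs N (mu - x)] | x <- iota 0 mu.+1].
Proof. by []. Qed.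

Lemma mem_cvecs N mu s : (s \in cvecs N mu) = (size s == N) && (sumn s == mu).
Proof.
elim: N mu s => [|N IH] mu s.
  case: mu => [|mu]; case: s => [|x s] //=; rewrite ?inE //.
rewrite cvecsS; apply/idP/idP => [/flatten_mapP [x xi /mapP [s' s's ->]]|].
  move: s's; rewrite IH /= => /andP[/eqP-> /eqP->]; rewrite eqxx /=.
  by move: xi; rewrite mem_iota /= add0n ltnS => h; rewrite subnKC.
case: s => [|x s] // /andP[/eqP [sz] /eqP sm].
apply/flatten_mapP; exists x.
  rewrite mem_iota add0n ltnS -sm; exact: leq_addr.
apply/mapP; exists s => //; rewrite IH sz eqxx -sm /=.
by rewrite addKn.
Qed.

Lemma uniq_cvecs N mu : uniq (cvecs N mu).
Proof.
elim: N mu => [|N IH] mu; first by rewrite /=; case: mu.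
rewrite cvecsS; apply: (@uniq_flatten_tag _ _ _ (head 0)); first exact: iota_uniq.
  by move=> x _; rewrite map_inj_uniq // => a b [].
by move=> x y _ /mapP [s _ ->].
Qed.

Lemma hockey N mu : \sum_(y < mu.+1) 'C(N + y - 1, y) = 'C(N + mu, mu).
Proof.
elim: mu => [|mu IH]; first by rewrite big_ord1 !bin0.
by rewrite big_ord_recr /= IH addnS subn1 /= binS addnC.
Qed.

Lemma size_cvecs N mu : size (cvecs N mu) = 'C(N + mu - 1, mu).
Proof.
elim: N mu => [|N IH] mu.
  by rewrite /=; case: mu => [|mu] //=; rewrite add0n subn1 /= bin_small.
rewrite cvecsS size_flatten /shape -map_comp sumnE big_map.
rewrite (eq_bigr (fun x => 'C(N + (mu - x) - 1, mu - x))); last first.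
  by move=> x _; rewrite /= size_map IH.
rewrite -[iota 0 mu.+1]/(index_iota 0 mu.+1).
rewrite big_nat_rev /= big_mkord.
rewrite (eq_bigr (fun y : 'I_mu.+1 => 'C(N + y - 1, y))); last first.
  move=> y _; rewrite add0n subSS subKn //; exact: ltnSE (ltn_ord y).
by rewrite hockey addSn subn1.
Qed.
Fixpoint prodl (T : Type) (Ls : seq (seq T)) : seq (seq T) :=
  if Ls is L :: Ls' then flatten [seq [seq x :: y | y <- prodl Ls'] | x <- L]
  else [:: [::]].

Lemma prodlS (T : Type) L (Ls : seq (seq T)) :
  prodl (L :: Ls) = flatten [seq [seq x :: y | y <- prodl Ls] | x <- L].
Proof. by []. Qed.

Lemma size_prodl (T : Type) (Ls : seq (seq T)) : size (prodl Ls) = \prod_(L <- Ls) size L.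
Proof.
elim: Ls => [|L Ls IH]; first by rewrite big_nil.
rewrite prodlS big_cons size_flatten /shape -map_comp.
rewrite (eq_map (g := fun _ => size (prodl Ls))); last by move=> x /=; rewrite size_map.
by rewrite sumn_map_const IH.
Qed.

Lemma mem_prodl (T : eqType) (Ls : seq (seq T)) s :
  (s \in prodl Ls) = all2 (fun x L => x \in L) s Ls.
Proof.
elim: Ls s => [|L Ls IH] s; first by case: s.
rewrite prodlS; apply/idP/idP => [/flatten_mapP [x xL /mapP [y yP ->]]|].
  by rewrite /= xL -IH.
case: s => [|x s] //= /andP[xL sP].
apply/flatten_mapP; exists x => //; apply/mapP; exists s => //; by rewrite IH.
Qed.

Lemma uniq_prodl (T : eqType) (Ls : seq (seq T)) : all uniq Ls -> uniq (prodl Ls).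
Proof.
elim: Ls => [|L Ls IH] // /andP[uL uLs]; rewrite prodlS.
case: L uL => [|x0 L'] uL //.
apply: (@uniq_flatten_tag _ _ _ (head x0)) => //.
  by move=> x _; rewrite map_inj_uniq ?IH // => a b [].
by move=> x y _ /mapP [z _ ->].
Qed.

Lemma mem_seqs_len n b s : (s \in seqs_len n b) = (size s == n) && all (fun x => x < b) s.
Proof.
elim: n s => [|n IH] s; first by case: s.
apply/idP/idP => [/allpairsPdep [x [y [xi yP ->]]]|].
  move: yP; rewrite IH => /andP[sy ay] /=; rewrite eqSS sy ay andbT.
  by move: xi; rewrite mem_iota.
case: s => [|x s] // /andP[sz /andP[xb sb]].
apply/allpairsPdep; exists x, s; split => //; first by rewrite mem_iota.
by rewrite IH; apply/andP; split.
Qed.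

Lemma mem_partitions j a : (a \in partitions j) = is_partition j a.
Proof.
rewrite /partitions mem_undup mem_filter andb_idr // => /and3P [_ pa /eqP sa].
apply/flatten_mapP; exists (size a).
  by rewrite mem_iota add0n ltnS -sa size_le_sumn.
rewrite mem_seqs_len eqxx /=; apply/allP => x xa.
by rewrite ltnS -sa elem_le_sumn.
Qed.

Lemma uniq_partitions j : uniq (partitions j).
Proof. exact: undup_uniq. Qed.

Definition blocks (k j : nat) (a : seq nat) :=
  [seq cvecs (size (cvecs k i)) (mult i a) | i <- iota 1 j].

Definition Ecat (k mm : nat) : seq ((nat * seq nat) * seq (seq nat)) :=
  flatten [seq flatten [seq [seq (j, a, cs) | cs <- prodl (blocks k j a)]
                       | a <- partitions j] | j <- iota 0 mm.+1].

Lemma size_Ecat k mm : size (Ecat k mm) =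
  (\sum_(0 <= j < mm.+1) \sum_(a <- partitions j)
        \prod_(1 <= i < j.+1)
          'C('C(i + k - 1, i) + mult i a - 1, mult i a))%N.
Proof.
rewrite /Ecat size_flatten /shape -map_comp sumnE big_map.
apply: eq_bigr => j _ /=.
rewrite size_flatten /shape -map_comp sumnE big_map.
apply: eq_bigr => a _ /=.
rewrite size_map size_prodl /blocks big_map.
have -> : index_iota 1 j.+1 = iota 1 j by rewrite /index_iota subSS subn0.
apply: eq_bigr => i _; by rewrite !size_cvecs (addnC k i).
Qed.

Lemma uniq_Ecat k mm : uniq (Ecat k mm).
Proof.
apply: (@uniq_flatten_tag _ _ _ (fun K => K.1.1)); first exact: iota_uniq.
- move=> j _; apply: (@uniq_flatten_tag _ _ _ (fun K => K.1.2)).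
  + exact: uniq_partitions.
  + move=> a _; rewrite map_inj_uniq; last by move=> x y [].
    apply: uniq_prodl; apply/allP => L /mapP [i _ ->]; exact: uniq_cvecs.
  + by move=> a y _ /mapP [cs _ ->].
- by move=> j y _ /flatten_mapP [a _ /mapP [cs _ ->]].
Qed.

Lemma mem_Ecat k mm j a cs : ((j, a, cs) \in Ecat k mm) =
  [&& j <= mm, is_partition j a & cs \in prodl (blocks k j a)].
Proof.
apply/idP/idP.
  move=> /flatten_mapP [j' j'i /flatten_mapP [a' a'P /mapP [cs' cs'P [e1 e2 e3]]]].
  subst; rewrite -mem_partitions a'P cs'P !andbT.
  by move: j'i; rewrite mem_iota add0n ltnS.
move=> /and3P [jm pa csP].
apply/flatten_mapP; exists j; first by rewrite mem_iota add0n ltnS.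
apply/flatten_mapP; exists a; first by rewrite mem_partitions.
by apply/mapP; exists cs.
Qed.

Lemma all2_nth (S T : Type) (r : S -> T -> bool) s t x0 y0 : all2 r s t ->
  size s = size t /\ forall n, n < size s -> r (nth x0 s n) (nth y0 t n).
Proof.
elim: s t => [|x s IH] [|y t] //= /andP[rxy /IH [-> h]]; split => // [[|n]] //=.
by rewrite ltnS; apply: h.
Qed.

Definition alphaR (Rs : seq (seq nat)) := sort geq [seq x <- map sumn Rs | 0 < x].

Definition keyR (k : nat) (Rs : seq (seq nat)) : (nat * seq nat) * seq (seq nat) :=
  (sumn (map sumn Rs), alphaR Rs,
   [seq [seq count_mem x Rs | x <- cvecs k i] | i <- iota 1 (sumn (map sumn Rs))]).

Lemma geq_total' : total geq. Proof. by move=> x y; rewrite /geq /= leq_total. Qed.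
Lemma geq_trans' : transitive geq. Proof. by move=> x y z /= h1 h2; apply: leq_trans h2 h1. Qed.
Lemma geq_anti' : antisymmetric geq.
Proof. by move=> x y /andP[h1 h2]; apply/eqP; rewrite eqn_leq; apply/andP; split. Qed.

Lemma keyR_perm k Rs Rs' : perm_eq Rs Rs' -> keyR k Rs = keyR k Rs'.
Proof.
move=> h; have hs := perm_sumn (perm_map sumn h).
rewrite /keyR /alphaR hs; congr (_, _, _).
  apply/perm_sortP; [exact: geq_total'|exact: geq_trans'|exact: geq_anti'|].
  by apply: perm_filter; apply: perm_map.
apply: eq_map => i; apply: eq_map => x. by move/seq.permP: h.
Qed.

Lemma count_sumn_eq Rs i : 0 < i -> count (fun r => sumn r == i) Rs = mult i (alphaR Rs).
Proof.
move=> i0; rewrite /mult /alphaR.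
rewrite count_sort count_filter count_map.
by apply: eq_count => r /=; case: eqP => // ->; rewrite i0.
Qed.

Lemma count_cvecs k Rs i : all (fun r => size r == k) Rs ->
  count (mem (cvecs k i)) Rs = count (fun r => sumn r == i) Rs.
Proof.
move=> /allP hk; apply: eq_in_count => r rR /=.
by rewrite mem_cvecs (hk r rR).
Qed.

Lemma keyR_mem k mm Rs : all (fun r => size r == k) Rs ->
  sumn (map sumn Rs) <= mm -> keyR k Rs \in Ecat k mm.
Proof.
move=> hk hm; rewrite mem_Ecat hm /=.
apply/andP; split.
  apply/and3P; split.
  - exact: sort_sorted geq_total' _.
  - by rewrite all_sort; apply: filter_all.
  - by rewrite /alphaR (perm_sumn (permEl (perm_sort _ _))) sumn_filter_pos.
rewrite mem_prodl /blocks all2_map_same; apply/allP => i.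
rewrite mem_iota => /andP[i1 _].
rewrite mem_cvecs size_map eqxx /= sumnE big_map sum_count_mem ?uniq_cvecs //.
by rewrite count_cvecs // count_sumn_eq.
Qed.

Lemma sumn_eq0_nseq (r : seq nat) : (sumn r == 0) = (r == nseq (size r) 0).
Proof. by elim: r => //= x r IH; rewrite addn_eq0 IH eqseq_cons. Qed.

Lemma keyR_inj k Rs Rs' : size Rs = size Rs' ->
  all (fun r => size r == k) Rs -> all (fun r => size r == k) Rs' ->
  keyR k Rs = keyR k Rs' -> perm_eq Rs Rs'.
Proof.
move=> hsz hk hk' [hj ha hc].
apply/allP => x _; apply/eqP.
have notin S : all (fun r => size r == k) S -> size x != k -> count_mem x S = 0.
  move=> /allP hS hx; apply/count_memPn; apply/negP => xS.
  by move: (hS x xS); rewrite (negbTE hx).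
have [hx|hx] := boolP (size x == k); last by rewrite !notin.
have [i0|ipos] := posnP (sumn x).
  have cz S : all (fun r => size r == k) S ->
      count_mem x S = size S - size (alphaR S).
    move=> /allP hS.
    rewrite /alphaR size_sort size_filter count_map -(count_predC (fun r => 0 < sumn r) S) addKn.
    apply: eq_in_count => r rS /=.
    have -> : x = nseq k 0 by apply/eqP; rewrite -(eqP hx) -sumn_eq0_nseq i0.
    by rewrite -eqn0Ngt -(eqP (hS r rS)) sumn_eq0_nseq.
  by rewrite !cz // hsz ha.
have big S : sumn (map sumn S) < sumn x -> count_mem x S = 0.
  move=> hl; apply/count_memPn; apply/negP => xS.
  by move: hl; rewrite ltnNge elem_le_sumn // map_f.
have [jle|jlt] := leqP (sumn x) (sumn (map sumn Rs)); last first.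
  by rewrite !big // -hj.
have iin : sumn x \in iota 1 (sumn (map sumn Rs)) by rewrite mem_iota ipos /= add1n ltnS.
move: hc; rewrite -hj => /eq_in_map /(_ _ iin) /eq_in_map; apply.
by rewrite mem_cvecs hx eqxx.
Qed.

Definition blockrows (c : seq nat) (X : seq (seq nat)) :=
  flatten [seq nseq (nth 0 c (index x X)) x | x <- X].

Lemma count_blockrows c X y : uniq X ->
  count_mem y (blockrows c X) = if y \in X then nth 0 c (index y X) else 0.
Proof.
move=> uX; rewrite /blockrows count_flatten -map_comp sumnE big_map.
rewrite (eq_bigr (fun x => if x == y then nth 0 c (index x X) else 0)).
  by rewrite sum_if_eqT.
by move=> x _ /=; rewrite count_nseq /=; case: eqP => _; rewrite ?mul1n ?mul0n.
Qed.

Lemma size_blockrows c X : uniq X -> size c = size X -> size (blockrows c X) = sumn c.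
Proof.
move=> uX sc; rewrite /blockrows size_flatten /shape -map_comp.
rewrite (eq_map (g := fun x => nth 0 c (index x X))); last by move=> x /=; rewrite size_nseq.
by rewrite map_nth_index.
Qed.

Lemma mem_blockrows c X y : y \in blockrows c X -> y \in X.
Proof. by move=> /flatten_mapP [x xX]; rewrite mem_nseq => /andP[_ /eqP ->]. Qed.

Definition nzrows k (cs : seq (seq nat)) j :=
  flatten [seq blockrows (nth [::] cs i.-1) (cvecs k i) | i <- iota 1 j].

Lemma count_nzrows k cs j y : size y = k -> 0 < sumn y ->
  count_mem y (nzrows k cs j) =
  if sumn y <= j then nth 0 (nth [::] cs (sumn y).-1) (index y (cvecs k (sumn y))) else 0.
Proof.
move=> sy py; rewrite /nzrows count_flatten -map_comp sumnE big_map.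
rewrite (eq_bigr (fun i => if i == sumn y then
   nth 0 (nth [::] cs i.-1) (index y (cvecs k i)) else 0)).
  by rewrite sum_if_eq ?iota_uniq // mem_iota py add1n ltnS.
move=> i _ /=; rewrite count_blockrows ?uniq_cvecs // mem_cvecs sy eqxx /= eq_sym.
by case: eqP => // ->.
Qed.

Lemma all_size_nzrows k cs j : all (fun r => size r == k) (nzrows k cs j).
Proof.
apply/allP => r /flatten_mapP [i _ /mem_blockrows].
by rewrite mem_cvecs => /andP[].
Qed.

Lemma sumn_count_iota j a : all (fun x => (0 < x) && (x <= j)) a ->
  \sum_(i <- iota 1 j) mult i a = size a.
Proof.
move=> ha; rewrite /mult sum_count_mem ?iota_uniq // -count_predT.
apply: eq_in_count => x xa /=; move: (allP ha x xa) => /andP[h1 h2].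
by rewrite mem_iota h1 add1n ltnS h2.
Qed.

Lemma keyR_surj k mm d K : mm <= d -> K \in Ecat k mm ->
  exists Rs, [/\ size Rs = d, all (fun r => size r == k) Rs & keyR k Rs = K].
Proof.
case: K => [[j a] cs] hd; rewrite mem_Ecat => /and3P [jm /and3P [sa pa /eqP suma] csP].
move: csP; rewrite mem_prodl => /(all2_nth [::] [::]) [scs hcs].
move: scs; rewrite /blocks size_map size_iota => scs.
have hci i : 0 < i <= j -> (size (nth [::] cs i.-1) = size (cvecs k i)) /\
    sumn (nth [::] cs i.-1) = mult i a.
  move=> /andP[i1 ij]; have := hcs i.-1; rewrite scs.
  have il : i.-1 < j by rewrite prednK // ltnS.
  move=> /(_ il); rewrite (nth_map 0) ?size_iota // nth_iota // add1n prednK //.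
  by rewrite mem_cvecs => /andP[/eqP -> /eqP ->].
have aj : all (fun x => (0 < x) && (x <= j)) a.
  apply/allP => x xa; rewrite (allP pa x xa) /= -suma; exact: elem_le_sumn.
set nz := nzrows k cs j.
have snz : size nz = size a.
  rewrite /nz /nzrows size_flatten /shape -map_comp sumnE big_map -(sumn_count_iota aj).
  apply: eq_big_seq => i; rewrite mem_iota add1n ltnS => /andP[i1 ij] /=.
  have [h1 h2] := hci i (andb_true_intro (conj i1 ij)).
  by rewrite size_blockrows ?uniq_cvecs.
have hsa : size a <= d.
  apply: leq_trans hd; apply: leq_trans jm; rewrite -suma; exact: size_le_sumn.
exists (nz ++ nseq (d - size nz) (nseq k 0)).
have hk : all (fun r => size r == k) (nz ++ nseq (d - size nz) (nseq k 0)).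
  rewrite all_cat all_size_nzrows /=; apply/allP => r; rewrite mem_nseq.
  by move=> /andP[_ /eqP ->]; rewrite size_nseq.
split => //; first by rewrite size_cat size_nseq snz subnKC.
set Rs := nz ++ _.
have cnt y : size y = k -> 0 < sumn y -> count_mem y Rs =
  if sumn y <= j then nth 0 (nth [::] cs (sumn y).-1) (index y (cvecs k (sumn y))) else 0.
  move=> sy py; rewrite count_cat count_nseq count_nzrows //=.
  have -> : (nseq k 0 == y) = false.
    by apply/negP => /eqP e; move: py; rewrite -e sumn_nseq mul0n.
  by rewrite mul0n addn0.
have ha : alphaR Rs = a.
  rewrite /alphaR -{1}(sorted_sort geq_trans' sa); apply/perm_sortP.
  - exact: geq_total'.
  - exact: geq_trans'.
  - exact: geq_anti'.
  apply/allP => x _; apply/eqP; rewrite count_filter count_map.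
  have [x0|xpos] := posnP x.
    subst x; rewrite (eq_count (a2 := pred0)); last first.
      by move=> r /=; case: eqP => // ->.
    rewrite count_pred0; apply/esym/count_memPn; apply/negP => h.
    by move: (allP pa 0 h).
  rewrite (eq_count (a2 := fun r => sumn r == x)); last first.
    by move=> r /=; case: eqP => // ->; rewrite xpos.
  rewrite -(count_cvecs x hk) -sum_count_mem ?uniq_cvecs //.
  rewrite (eq_big_seq (fun y => if x <= j then nth 0 (nth [::] cs x.-1) (index y (cvecs k x)) else 0)); last first.
    move=> y; rewrite mem_cvecs => /andP[/eqP sy /eqP sx].
    by rewrite cnt // sx.
  case: leqP => xj.
    have [h1 h2] := hci x (andb_true_intro (conj xpos xj)).
    by rewrite -(big_map (fun y => nth 0 (nth [::] cs x.-1) (index y (cvecs k x))) xpredT (fun i => i)) -sumnE map_nth_index ?uniq_cvecs.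
  rewrite big1 // ; apply/esym/count_memPn; apply/negP => xa.
  by move: (allP aj x xa); rewrite (leqNgt x j) xj andbF.
have hsum : sumn (map sumn Rs) = j.
  by rewrite -sumn_filter_pos -(perm_sumn (permEl (perm_sort geq _))) -/(alphaR Rs) ha.
rewrite /keyR hsum ha; congr (_, _, _).
apply: (@eq_from_nth _ [::]); first by rewrite size_map size_iota scs.
move=> n; rewrite size_map size_iota => nj.
rewrite (nth_map 0) ?size_iota // nth_iota // add1n.
have [h1 h2] := hci n.+1 (andb_true_intro (conj (ltn0Sn n) nj)).
rewrite -[RHS](map_nth_index (uniq_cvecs k n.+1) h1).
apply/eq_in_map => y; rewrite mem_cvecs => /andP[/eqP sy /eqP sx].
rewrite cnt // sx; move: nj; case: leqP => //.
Qed.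

Lemma digits_inj b n (f g : 'I_n -> nat) : (forall i, f i < b) -> (forall i, g i < b) ->
  \sum_(i < n) f i * b ^ i = \sum_(i < n) g i * b ^ i -> f =1 g.
Proof.
elim: n f g => [|n IH] f g hf hg e i; first by case: i.
have b0 : 0 < b by apply: leq_ltn_trans (hf ord0).
move: e; rewrite !big_ord_recl !expn0 !muln1.
have sh (h : 'I_n.+1 -> nat) : \sum_(i < n) h (lift ord0 i) * b ^ (bump 0 i) =
   \sum_(i < n) h (lift ord0 i) * b ^ i * b.
  by apply: eq_bigr => j _; rewrite /bump /= add1n expnS mulnCA mulnC.
rewrite !sh -!big_distrl /= => e.
have e0 : f ord0 = g ord0.
  by have := congr1 (modn ^~ b) e; rewrite [f _ + _]addnC [g _ + _]addnC !modnMDl !modn_small.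
have e1 : \sum_(i < n) f (lift ord0 i) * b ^ i = \sum_(i < n) g (lift ord0 i) * b ^ i.
  have := congr1 (divn ^~ b) e.
  by rewrite [f _ + _]addnC [g _ + _]addnC !divnMDl // !divn_small // !addn0.
case: (unliftP ord0 i) => [j ->|->] //.
by apply: (IH (fun j => f (lift ord0 j)) (fun j => g (lift ord0 j))).
Qed.

Section Ident.
Variable (R : numDomainType).
Local Open Scope ring_scope.
Import GRing.Theory Num.Theory.

Lemma poly_zero_all (q : {poly R}) : (forall t, q.[t] = 0) -> q = 0.
Proof.
move=> h; apply: (@roots_geq_poly_eq0 _ q [seq i%:R | i <- iota 0 (size q)]).
- by apply/allP => x /mapP [i _ ->]; apply/rootP; exact: h.
- by rewrite map_inj_uniq ?iota_uniq // => x y /eqP; rewrite eqr_nat => /eqP.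
- by rewrite size_map size_iota.
Qed.

Lemma mnm_le_mdeg n (m : 'X_{1..n}) i : (m i <= mdeg m)%N.
Proof. by rewrite mdegE (bigD1 i) //= leq_addr. Qed.

Lemma mpoly_zero_all n (p : {mpoly R[n]}) : (forall v, p.@[v] = 0) -> p = 0.
Proof.
move=> h; set b := msize p.
pose enc (m : 'X_{1..n}) := (\sum_(i < n) m i * b ^ i)%N.
pose q : {poly R} := \sum_(m <- msupp p) p@_m *: 'X^(enc m).
have qt t : q.[t] = p.@[fun i => t ^+ (b ^ i)].
  rewrite mevalE horner_sum; apply: eq_bigr => m _; rewrite hornerZ hornerXn; congr (_ * _).
  rewrite /enc -prodrXr; apply: eq_bigr => i _; by rewrite -exprM mulnC.
have q0 : q = 0 by apply: poly_zero_all => t; rewrite qt h.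
apply/mpolyP => m; rewrite mcoeff0.
case: (boolP (m \in msupp p)) => mp; last by apply/memN_msupp_eq0.
have := congr1 (fun q : {poly R} => q`_(enc m)) q0.
rewrite coef0 coef_sum (bigD1_seq m) ?msupp_uniq //=.
rewrite coefZ coefXn eqxx mulr1 big1_seq ?addr0 //.
move=> m' /andP[ne m'p]; rewrite coefZ coefXn.
case: eqP => [e|_]; last by rewrite mulr0.
have bd (m0 : 'X_{1..n}) : m0 \in msupp p -> forall i, (m0 i < b)%N.
  by move=> h0 i; apply: leq_ltn_trans (mnm_le_mdeg m0 i) (msize_mdeg_lt h0).
have : m' = m by apply/mnmP/digits_inj; [exact: bd | exact: bd | exact: (esym e)].
by move/eqP: ne.
Qed.
End Ident.

Section Rows.
Variables (d k : nat).
Local Notation n := (d * k)%N.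

Definition ij (i : 'I_n) : 'I_d * 'I_k := enum_val (cast_ord (esym (mxvec_cast d k)) i).

Lemma ijK r c : ij (mxvec_index r c) = (r, c).
Proof. by rewrite /ij /mxvec_index cast_ordK enum_rankK. Qed.

Lemma ijK' i : mxvec_index (ij i).1 (ij i).2 = i.
Proof. by case/mxvec_indexP: i => r c; rewrite ijK. Qed.

Definition sigf (s : 'S_d) (i : 'I_n) : 'I_n := mxvec_index (s (ij i).1) (ij i).2.

Lemma sigf_inj s : injective (sigf s).
Proof.
move=> i i' h; have := congr1 ij h; rewrite /sigf !ijK => -[/perm_inj e1 e2].
by rewrite -(ijK' i) -(ijK' i') e1 e2.
Qed.

Definition sig (s : 'S_d) : 'S_n := perm (@sigf_inj s).

Lemma sigE s r c : sig s (mxvec_index r c) = mxvec_index (s r) c.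
Proof. by rewrite permE /sigf ijK. Qed.

Definition rowf (m : 'X_{1..n}) (r : 'I_d) : seq nat := [seq m (mxvec_index r c) | c <- enum 'I_k].
Definition rows (m : 'X_{1..n}) : seq (seq nat) := [seq rowf m r | r <- enum 'I_d].

Lemma nth_rowf m r (c : 'I_k) : nth 0 (rowf m r) c = m (mxvec_index r c).
Proof. by rewrite /rowf (nth_map c) ?nth_ord_enum // size_enum_ord. Qed.

Lemma nth_rows m (r : 'I_d) : nth [::] (rows m) r = rowf m r.
Proof. by rewrite /rows (nth_map r) ?nth_ord_enum // size_enum_ord. Qed.

Lemma size_rows m : size (rows m) = d.
Proof. by rewrite size_map size_enum_ord. Qed.

Lemma all_size_rows m : all (fun r => size r == k) (rows m).
Proof. by apply/allP => x /mapP [r _ ->]; rewrite size_map size_enum_ord. Qed.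

Lemma mdeg_rows m : mdeg m = sumn (map sumn (rows m)).
Proof.
rewrite mdegE (reindex (uncurry (@mxvec_index d k))) /=; last first.
  by apply: onW_bij; exists ij => [[r c]|i] /=; [exact: ijK | by rewrite -{2}(ijK' i); case: (ij i)].
rewrite (eq_bigr (fun p => m (mxvec_index p.1 p.2))); last by case.
rewrite -(pair_bigA _ (fun r c => m (mxvec_index r c))) /=.
rewrite /rows -map_comp sumnE big_map big_enum /=; apply: eq_bigr => r _.
by rewrite /rowf sumnE big_map big_enum.
Qed.

Local Notation "m # s" := [multinom m (s i) | i < n]
  (at level 40, left associativity, format "m # s").

Lemma rowf_perm (m : 'X_{1..n}) s r : rowf (m # (sig s)) r = rowf m (s r).
Proof. by apply: eq_map => c; rewrite mnmE sigE. Qed.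

Lemma rows_perm (m : 'X_{1..n}) s : perm_eq (rows (m # (sig s))) (rows m).
Proof.
rewrite /rows (eq_map (rowf_perm m s)) map_comp; apply: perm_map.
apply: uniq_perm; first by rewrite map_inj_uniq ?enum_uniq //; exact: perm_inj.
  exact: enum_uniq.
by move=> r; rewrite mem_enum; apply/mapP; exists (s^-1 r)%g; rewrite ?mem_enum ?permKV.
Qed.

Lemma perm_rows (m m' : 'X_{1..n}) : perm_eq (rows m') (rows m) -> exists s, m' = m # (sig s).
Proof.
have -> : rows m = [tuple rowf m r | r < d].
  apply: (@eq_from_nth _ [::]); first by rewrite size_rows.
  move=> r; rewrite size_rows => rd.
  by rewrite -[r]/(nat_of_ord (Ordinal rd)) nth_rows.
move=> /tuple_permP [s hs]; exists s; apply/mnmP => i.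
case/mxvec_indexP: i => r c; rewrite mnmE sigE -!nth_rowf.
by rewrite -nth_rows hs nth_mktuple tnth_mktuple.
Qed.

Lemma rows_surj Rs : size Rs = d -> all (fun r => size r == k) Rs ->
  exists m, rows m = Rs.
Proof.
move=> sR hk.
exists [multinom nth 0 (nth [::] Rs (ij i).1) (ij i).2 | i < n].
apply: (@eq_from_nth _ [::]); first by rewrite size_rows sR.
move=> r; rewrite size_rows => rd.
rewrite -[r]/(nat_of_ord (Ordinal rd)) nth_rows.
have hs : size (nth [::] Rs r) = k.
  by apply/eqP/(allP hk); rewrite mem_nth // sR.
apply: (@eq_from_nth _ 0); first by rewrite size_map size_enum_ord hs.
move=> c; rewrite size_map size_enum_ord => ck.
by rewrite -[c]/(nat_of_ord (Ordinal ck)) nth_rowf mnmE ijK.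
Qed.

Definition key (m : 'X_{1..n}) := keyR k (rows m).

Lemma key_perm (m : 'X_{1..n}) s : key (m # (sig s)) = key m.
Proof. exact/keyR_perm/rows_perm. Qed.

Lemma key_inj (m m' : 'X_{1..n}) : key m = key m' -> exists s, m' = m # (sig s).
Proof.
move=> h; apply: perm_rows; apply: keyR_inj (esym h);
  by rewrite ?size_rows ?all_size_rows.
Qed.

End Rows.

Section Final.
Local Open Scope ring_scope.
Import GRing.Theory Num.Theory.

Lemma meval_msym (R : comNzRingType) n (s : 'S_n) (p : {mpoly R[n]}) v :
  (msym s p).@[v] = p.@[fun i => v (s i)].
Proof.
rewrite {1}(mpolyE p) [RHS]mevalE.
have -> : msym s (\sum_(mo <- msupp p) p@_mo *: 'X_[mo]) = \sum_(mo <- msupp p) msym s (p@_mo *: 'X_[mo]).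
  by rewrite raddf_sum.
rewrite raddf_sum /=.
apply: eq_bigr => mo _; rewrite msymZ msymX mevalZ mevalX; congr (_ * _).
rewrite (reindex_inj (@perm_inj _ s)) /=; apply: eq_bigr => i _.
by rewrite mnmE permK.
Qed.

Lemma evalM_perm (R : realType) d k (p : {mpoly R[d * k]}) (s : 'S_d) X :
  evalM p (perm_mx s *m X) = (msym (sig k s) p).@[fun i => mxvec X 0 i].
Proof.
rewrite /evalM meval_msym -row_permE; apply: meval_eq => i.
by case/mxvec_indexP: i => r c; rewrite sigE !mxvecE mxE.
Qed.

End Final.

Section MainProof.
Local Open Scope ring_scope.
Import GRing.Theory Num.Theory.

Theorem mainTheorem6 (R : realType) (d k m : nat) :
  (m <= d)%N ->
  has_dim (@inv_poly_le R d k m)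
    (\sum_(0 <= j < m.+1) \sum_(a <- partitions j)
        \prod_(1 <= i < j.+1)
          'C('C(i + k - 1, i) + mult i a - 1, mult i a))%N.
Proof.
move=> hmd; rewrite -size_Ecat.
set EE := Ecat k m; set N := size EE.
pose K0 : (nat * seq nat) * seq (seq nat) := (0%N, [::], [::]).
pose E (i : 'I_N) := nth K0 EE i.
have hE (i : 'I_N) : E i \in EE by apply: mem_nth.
have hEj (i : 'I_N) : ((E i).1.1 <= m)%N.
  by move: (hE i); case: (E i) => [[j a] cs]; rewrite mem_Ecat => /and3P[].
have Einj (i j : 'I_N) : (E i == E j) = (i == j).
  by rewrite /E nth_uniq ?uniq_Ecat.
have keydeg (mo : 'X_{1..d * k}) : (@key d k mo).1.1 = mdeg mo by rewrite mdeg_rows.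
pose B (i : 'I_N) : {mpoly R[d * k]} :=
  \sum_(b : bmultinom (d * k) m.+1) ((@key d k (bmnm b) == E i)%:R *: 'X_[bmnm b]).
have hB (i : 'I_N) mo : (B i)@_mo = (@key d k mo == E i)%:R.
  rewrite /B raddf_sum /=.
  rewrite (eq_bigr (fun b => (@key d k (bmnm b) == E i)%:R * (bmnm b == mo)%:R)); last first.
    by move=> b _; rewrite mcoeffZ mcoeffX.
  case: (ltnP (mdeg mo) m.+1) => hdeg.
    rewrite (bigD1 (BMultinom hdeg)) //= eqxx mulr1 big1 ?addr0 // => b ne.
    suff -> : (bmnm b == mo) = false by rewrite mulr0.
    apply/negbTE; move: ne; apply: contra => /eqP e; by rewrite bmeqP /= e.
  rewrite big1; last first.
    move=> b _; suff -> : (bmnm b == mo) = false by rewrite mulr0.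
    apply/negP => /eqP e; move: (bmdeg b); rewrite e ltnNge.
    by rewrite hdeg.
  suff -> : (@key d k mo == E i) = false by [].
  apply/negP => /eqP e; have := hEj i; rewrite -e keydeg leqNgt.
  by rewrite hdeg.
have exk (i : 'I_N) : exists mo, @key d k mo == E i.
  have [Rs [sR aR kR]] := keyR_surj hmd (hE i).
  have [mo hmo] := rows_surj sR aR.
  by exists mo; rewrite /key hmo kR.
exists B; split.
- move=> i; split.
    rewrite msizeE; apply/bigmax_leqP_seq => mo hmo _.
    move: hmo; rewrite -[mo \in _]negbK -mcoeff_eq0 hB.
    have [e|ne] := eqVneq (@key d k mo) (E i); last by rewrite eqxx.
    by move=> _; rewrite ltnS -keydeg e hEj.
  move=> s X; rewrite evalM_perm /evalM; congr (meval _ _).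
  apply/mpolyP => mo; rewrite mcoeff_sym !hB.
  by rewrite key_perm.
- move=> c hc i.
  have [mo /eqP hmo] := exk i.
  have := congr1 (mcoeff mo) hc; rewrite mcoeff0 raddf_sum /=.
  rewrite (bigD1 i) //= mcoeffZ hB hmo eqxx mulr1 big1 ?addr0 //.
  move=> j ne; rewrite mcoeffZ hB hmo Einj eq_sym (negbTE ne) mulr0 //.
move=> p [hsz hinv].
have hsym (s : 'S_d) : msym (sig k s) p = p.
  apply/eqP; rewrite -subr_eq0; apply/eqP; apply: mpoly_zero_all => v.
  rewrite mevalB; apply/eqP; rewrite subr_eq0; apply/eqP.
  pose X : 'M[R]_(d, k) := vec_mx (\row_i v i).
  have hv : (fun i => mxvec X 0 i) =1 v by move=> i; rewrite vec_mxK mxE.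
  have := hinv s X; rewrite evalM_perm /evalM.
  by rewrite (meval_eq _ hv) (meval_eq _ hv).
have hinvc (s : 'S_d) (mo : 'X_{1..d * k}) :
    p@_([multinom mo (sig k s i) | i < d * k]) = p@_mo.
  by rewrite -mcoeff_sym hsym.
exists (fun i => p@_(xchoose (exk i))).
apply/mpolyP => mo; rewrite raddf_sum /=.
rewrite (eq_bigr (fun i => p@_(xchoose (exk i)) * (@key d k mo == E i)%:R)); last first.
  by move=> i _; rewrite mcoeffZ hB.
case: (boolP (@key d k mo \in EE)) => hin.
  have hidx : (index (@key d k mo) EE < N)%N by rewrite index_mem.
  pose i0 : 'I_N := Ordinal hidx.
  have Ei0 : E i0 = @key d k mo by rewrite /E /= nth_index.
  rewrite (bigD1 i0) //= -Ei0 eqxx mulr1 big1 ?addr0; last first.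
    by move=> j ne; rewrite Einj eq_sym (negbTE ne) mulr0.
  have /eqP hx := xchooseP (exk i0).
  have [s ->] := key_inj (etrans hx Ei0).
  by rewrite hinvc.
rewrite big1; last first.
  move=> i _; suff -> : (@key d k mo == E i) = false by rewrite mulr0.
  by apply/negP => /eqP e; move: hin; rewrite e hE.
apply/memN_msupp_eq0/msize_mdeg_ge; apply: leq_trans hsz _.
rewrite ltnNge; apply/negP => hle.
move: hin; rewrite /key keyR_mem // ?all_size_rows // -mdeg_rows.
by [].

Qed.

End MainProof.
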